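(* Let $\Pi^{(1)},\Pi^{(2)}$ be two projectors on a finite-dimensional Hilbert space $\mathcal{H}$. For every $\delta>0$ there exists a projector $\Pi^\star$ on $\mathcal{H}$ such that for all quantum states $\rho\in\mathcal{D}(\mathcal{H})$, $$\mathrm{Tr}[\Pi^\star\rho]\ge\max\{\mathrm{Tr}[\Pi^{(1)}\rho],\mathrm{Tr}[\Pi^{(2)}\rho]\}-\delta,$$ and $$\Pi^\star\preceq\frac{2}{\delta^2}\left(\Pi^{(1)}+\Pi^{(2)}\right).$$
   Context: $\mathcal{D}(\mathcal{H})$ is the set of density operators on $\mathcal{H}$; $P\preceq Q$ means $Q-P$ is positive semi-definite. *)

(* Defs.v *)
From HB Require Import structures.
From mathcomp Require Import all_boot all_order all_algebra.
Set Implicit Arguments. Unset Strict Implicit. Unset Printing Implicit Defensive.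
Import Order.TTheory GRing.Theory Num.Theory.
Local Open Scope ring_scope.

(* The finite-dimensional Hilbert space H is modelled as C^n (row vectors),
   C an arbitrary numClosedFieldType (e.g. the complex numbers), operators as
   n x n matrices, adjoint = conjugate transpose. *)

Definition adjmx (C : numClosedFieldType) (m n : nat) (A : 'M[C]_(m, n)) : 'M[C]_(n, m) :=
  (map_mx Num.conj A)^T.

Definition psd (C : numClosedFieldType) (n : nat) (A : 'M[C]_n) : Prop :=
  adjmx A = A /\ forall v : 'rV[C]_n, 0 <= (v *m A *m adjmx v) 0 0.

Definition loewner_le (C : numClosedFieldType) (n : nat) (P Q : 'M[C]_n) : Prop :=
  psd (Q - P).

Definition projector (C : numClosedFieldType) (n : nat) (P : 'M[C]_n) : Prop :=
  adjmx P = P /\ P *m P = P.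

Definition density (C : numClosedFieldType) (n : nat) (rho : 'M[C]_n) : Prop :=
  psd rho /\ \tr rho = 1.

(* Main.v *)
Require Import Defs.
From HB Require Import structures.
From mathcomp Require Import all_boot all_order all_algebra.
From mathcomp Require Import sesquilinear spectral.
From mathcomp Require Import ring.
Import Order.TTheory GRing.Theory Num.Theory.
Local Open Scope ring_scope.

Set Implicit Arguments. Unset Strict Implicit.
Section Aux.
Variable C : numClosedFieldType.

Lemma adjmxE m n (A : 'M[C]_(m, n)) i j : adjmx A i j = (A j i)^*.
Proof. by rewrite /adjmx !mxE. Qed.

Lemma adjmxM m n p (A : 'M[C]_(m, n)) (B : 'M[C]_(n, p)) :
  adjmx (A *m B) = adjmx B *m adjmx A.
Proof.
apply/matrixP=> i j; rewrite adjmxE !mxE rmorph_sum.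
by apply: eq_bigr => k _; rewrite !adjmxE rmorphM mulrC.
Qed.

Lemma adjmxK m n (A : 'M[C]_(m, n)) : adjmx (adjmx A) = A.
Proof. by apply/matrixP=> i j; rewrite !adjmxE conjCK. Qed.

Lemma adjmxD m n (A B : 'M[C]_(m, n)) : adjmx (A + B) = adjmx A + adjmx B.
Proof. by apply/matrixP=> i j; rewrite !(adjmxE, mxE) ?rmorphD. Qed.

Lemma adjmxN m n (A : 'M[C]_(m, n)) : adjmx (- A) = - adjmx A.
Proof. by apply/matrixP=> i j; rewrite !(adjmxE, mxE) ?rmorphN. Qed.

Lemma adjmxB m n (A B : 'M[C]_(m, n)) : adjmx (A - B) = adjmx A - adjmx B.
Proof. by rewrite adjmxD adjmxN. Qed.

Lemma adjmxZ m n a (A : 'M[C]_(m, n)) : adjmx (a *: A) = a^* *: adjmx A.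
Proof. by apply/matrixP=> i j; rewrite !(adjmxE, mxE) ?rmorphM. Qed.

Lemma adjmx1 n : adjmx (1%:M : 'M[C]_n) = 1%:M.
Proof.
apply/matrixP=> i j; rewrite !(adjmxE, mxE) eq_sym.
by rewrite conjC_nat.
Qed.

Lemma adjmx0 m n : adjmx (0 : 'M[C]_(m, n)) = 0.
Proof. by apply/matrixP=> i j; rewrite !adjmxE !mxE conjC0. Qed.

Lemma adj_diag n (f : 'rV[C]_n) : (forall i, 0 <= f 0 i) ->
  adjmx (diag_mx f) = diag_mx f.
Proof.
move=> f0; apply/matrixP=> i j; rewrite !(adjmxE, mxE) eq_sym.
by case: eqP => [->|_]; rewrite ?mulr1n ?mulr0n ?conjC0 ?geC0_conj.
Qed.

Lemma psd0 n : psd (0 : 'M[C]_n).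
Proof. by split; [rewrite adjmx0 | move=> v; rewrite mulmx0 mul0mx mxE]. Qed.

Lemma psdD n (A B : 'M[C]_n) : psd A -> psd B -> psd (A + B).
Proof.
move=> [hA qA] [hB qB]; split; first by rewrite adjmxD hA hB.
by move=> v; rewrite mulmxDr mulmxDl mxE addr_ge0.
Qed.

Lemma psdZ n a (A : 'M[C]_n) : 0 <= a -> psd A -> psd (a *: A).
Proof.
move=> a0 [hA qA]; split; first by rewrite adjmxZ hA geC0_conj.
by move=> v; rewrite -scalemxAr -scalemxAl mxE mulr_ge0.
Qed.

Lemma psd_congr n (M X : 'M[C]_n) : psd M -> psd (adjmx X *m M *m X).
Proof.
move=> [hM qM]; split; first by rewrite !adjmxM adjmxK hM mulmxA.
move=> v; have := qM (v *m adjmx X).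
by rewrite adjmxM adjmxK !mulmxA.
Qed.

Lemma projector_psd n (P : 'M[C]_n) : projector P -> psd P.
Proof.
move=> [hP PP]; split => // v.
have -> : v *m P *m adjmx v = (v *m P) *m adjmx (v *m P).
  by rewrite adjmxM hP !mulmxA -(mulmxA v P P) PP.
rewrite mxE; apply: sumr_ge0 => i _; rewrite adjmxE; exact: mul_conjC_ge0.
Qed.

Lemma projectorC n (P : 'M[C]_n) : projector P -> projector (1%:M - P).
Proof.
move=> [hP PP]; split; first by rewrite adjmxB adjmx1 hP.
by rewrite mulmxBl mul1mx mulmxBr mulmx1 PP subrr subr0.
Qed.

Lemma psd_diag n (f : 'rV[C]_n) : (forall i, 0 <= f 0 i) -> psd (diag_mx f).
Proof.
move=> f0; split; first exact: adj_diag.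
move=> v; rewrite mul_mx_diag mxE; apply: sumr_ge0 => i _.
rewrite !mxE -mulrA mulrC -mulrA; apply: mulr_ge0 => //.
by rewrite mulrC mul_conjC_ge0.
Qed.

Lemma psd_diag_ge0 n (N : 'M[C]_n) i : psd N -> 0 <= N i i.
Proof.
move=> [_ qN]; have := qN (delta_mx 0 i).
have -> : adjmx (delta_mx 0 i : 'rV[C]_n) = delta_mx i 0.
  by apply/matrixP=> a b; rewrite !(adjmxE, mxE) conjC_nat andbC.
by rewrite -rowE -colE !mxE.
Qed.

Lemma adj_tc m n (M : 'M[C]_(m, n)) : (M ^t Num.conj)%sesqui = adjmx M.
Proof. by rewrite /adjmx map_trmx. Qed.

Lemma spectral_psd n (A : 'M[C]_n) : psd A ->
  exists U : 'M[C]_n, exists d : 'rV[C]_n,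
    [/\ U *m adjmx U = 1%:M, adjmx U *m U = 1%:M, (forall i, 0 <= d 0 i) &
        A = adjmx U *m diag_mx d *m U].
Proof.
move=> hA; have nA : A \is normalmx.
  by apply/normalmxP; rewrite adj_tc hA.1.
move/orthomx_spectralP: nA.
set U := spectralmx A; set d := spectral_diag A => eA.
have uU : U \is unitarymx by apply: spectral_unitarymx.
have U1 : U *m adjmx U = 1%:M by move/unitarymxP: uU; rewrite adj_tc.
have U2 : adjmx U *m U = 1%:M.
  by rewrite -adj_tc -invmx_unitary // mulVmx // spectral_unit.
rewrite invmx_unitary // adj_tc in eA.
exists U, d; split => // i.
have := psd_diag_ge0 i (psd_congr (adjmx U) hA).
rewrite adjmxK eA !mulmxA U1 mul1mx -mulmxA U1 mulmx1 mxE eqxx mulr1n.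
by [].
Qed.

Lemma trace_ge0 n (M rho : 'M[C]_n) : psd M -> psd rho -> 0 <= \tr (M *m rho).
Proof.
move=> hM hr; have [U [d [U1 U2 d0 eM]]] := spectral_psd hM.
rewrite eM -!mulmxA mxtrace_mulC !mulmxA -!mulmxA.
have hN := psd_congr (adjmx U) hr; rewrite adjmxK in hN.
rewrite /mxtrace; apply: sumr_ge0 => i _.
rewrite mul_diag_mx mxE; apply: mulr_ge0 => //.
by rewrite mulmxA; apply: psd_diag_ge0.
Qed.

Definition qf n (v : 'rV[C]_n) (M : 'M[C]_n) := (v *m M *m adjmx v) 0 0.

Lemma qfD n (v : 'rV[C]_n) A B : qf v (A + B) = qf v A + qf v B.
Proof. by rewrite /qf mulmxDr mulmxDl [in LHS]mxE. Qed.
Lemma qfN n (v : 'rV[C]_n) A : qf v (- A) = - qf v A.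
Proof. by rewrite /qf mulmxN mulNmx [in LHS]mxE. Qed.
Lemma qfB n (v : 'rV[C]_n) A B : qf v (A - B) = qf v A - qf v B.
Proof. by rewrite qfD qfN. Qed.
Lemma qfZ n (v : 'rV[C]_n) a A : qf v (a *: A) = a * qf v A.
Proof. by rewrite /qf -scalemxAr -scalemxAl [in LHS]mxE. Qed.

Lemma key n (S P1 P2 : 'M[C]_n) (c delta : C) :
  projector S -> projector P1 -> projector P2 -> 0 < delta -> 0 <= c ->
  c * (1 + delta^-1) <= delta ->
  psd (c *: (1%:M - S) - (1%:M - S) *m (P1 + P2) *m (1%:M - S)) ->
  psd (delta *: 1%:M + S - P1).
Proof.
move=> hS hP1 hP2 d0 c0 hc hQ.
have [aS SS] := hS; have [aP1 P1P1] := hP1; have [aP2 _] := hP2.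
split; first by rewrite adjmxB adjmxD adjmxZ adjmx1 aS aP1 geC0_conj // ltW.
move=> v.
set X := (1 + delta) *: S - 1%:M.
have aX : adjmx X = X by rewrite /X adjmxB adjmxZ adjmx1 aS geC0_conj // addr_ge0 // ltW.
have aQ : adjmx (1%:M - S) = 1%:M - S by rewrite adjmxB adjmx1 aS.
have F1 := (psd_congr S (projector_psd (projectorC hP1))).2 v.
have F2 := hQ.2 v.
have F3 := (psd_congr (1%:M - S) (projector_psd hP2)).2 v.
have F4 := (projector_psd (projectorC hS)).2 v.
have F5 := (psd_congr X (projector_psd hP1)).2 v.
rewrite aS in F1; rewrite aQ in F3; rewrite aX in F5.
rewrite -/(qf v _) in F1; rewrite -/(qf v _) in F2; rewrite -/(qf v _) in F3;
rewrite -/(qf v _) in F4; rewrite -/(qf v _) in F5; rewrite -/(qf v _).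
have dn0 : delta != 0 by rewrite gt_eqF.
have E : qf v (delta *: 1%:M + S - P1) =
   (1 + delta) * qf v (S *m (1%:M - P1) *m S)
 + (1 + delta^-1) * (qf v (c *: (1%:M - S) - (1%:M - S) *m (P1 + P2) *m (1%:M - S))
                     + qf v ((1%:M - S) *m P2 *m (1%:M - S)))
 + (delta - c * (1 + delta^-1)) * qf v (1%:M - S)
 + delta^-1 * qf v (X *m P1 *m X).
  rewrite /X.
  rewrite !(mulmxBl, mulmxBr, mulmxDl, mulmxDr, mulNmx, mulmxN, mul1mx, mulmx1,
            mulmxA, SS).
  rewrite !(qfD, qfB, qfN, qfZ).
  rewrite -!scalemxAl -!scalemxAr ?mulmxA !qfZ.
  by field.
rewrite E; apply: addr_ge0; [apply: addr_ge0; [apply: addr_ge0|]|].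
- by apply: mulr_ge0 => //; rewrite addr_ge0 // ltW.
- apply: mulr_ge0; first by rewrite addr_ge0 // invr_ge0 ltW.
  exact: addr_ge0.
- by apply: mulr_ge0 => //; rewrite subr_ge0.
- by apply: mulr_ge0 => //; rewrite invr_ge0 ltW.
Qed.

Lemma tr_step n (S P rho : 'M[C]_n) (delta : C) :
  psd (delta *: 1%:M + S - P) -> density rho ->
  \tr (P *m rho) - delta <= \tr (S *m rho).
Proof.
move=> hM [hr tr1]; have := trace_ge0 hM hr.
rewrite !mulmxDl mulNmx -scalemxAl mul1mx !mxtraceD raddfN /= mxtraceZ tr1 mulr1.
move=> h; rewrite -subr_ge0.
suff -> : \tr (S *m rho) - (\tr (P *m rho) - delta) =
          delta + \tr (S *m rho) + - \tr (P *m rho) by [].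
by ring.
Qed.

Definition Dg n (U : 'M[C]_n) (f : 'rV[C]_n) := adjmx U *m diag_mx f *m U.

Section DgS.
Variables (n : nat) (U : 'M[C]_n).
Hypothesis U1 : U *m adjmx U = 1%:M.

Lemma DgM (f g : 'rV[C]_n) : Dg U f *m Dg U g = Dg U (\row_i (f 0 i * g 0 i)).
Proof.
rewrite /Dg !mulmxA -(mulmxA _ U) U1 mulmx1 -(mulmxA _ (diag_mx f)).
congr (_ *m _ *m _); apply/matrixP => i j; rewrite mul_diag_mx !mxE.
by case: eqP => _; rewrite ?mulr1n ?mulr0n ?mulr0.
Qed.

Lemma DgB (f g : 'rV[C]_n) : Dg U (f - g) = Dg U f - Dg U g.
Proof. by rewrite /Dg linearB /= mulmxBr mulmxBl. Qed.

Lemma DgZ a (f : 'rV[C]_n) : Dg U (a *: f) = a *: Dg U f.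
Proof. by rewrite /Dg linearZ /= -scalemxAr -scalemxAl. Qed.

Lemma Dg1 : adjmx U *m U = 1%:M -> Dg U (const_mx 1) = 1%:M.
Proof. by move=> U2; rewrite /Dg diag_const_mx mulmx1. Qed.

Lemma Dg_psd (f : 'rV[C]_n) : (forall i, 0 <= f 0 i) -> psd (Dg U f).
Proof. by move=> f0; apply: psd_congr; apply: psd_diag. Qed.

End DgS.

End Aux.

Lemma lemma2_aux (C : numClosedFieldType) (n : nat) (P1 P2 : 'M[C]_n)
    (hP1 : projector P1) (hP2 : projector P2) (delta : C) (hdelta : 0 < delta) :
  exists Pstar : 'M[C]_n,
    projector Pstar /\
    (forall rho : 'M[C]_n, density rho ->
       \tr (P1 *m rho) - delta <= \tr (Pstar *m rho) /\
       \tr (P2 *m rho) - delta <= \tr (Pstar *m rho)) /\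
    loewner_le Pstar ((2 / delta ^+ 2) *: (P1 + P2)).
Proof.
have dR : delta \is Num.real by apply: gtr0_real.
have d0 : 0 <= delta by apply: ltW.
have dn0 : delta != 0 by rewrite gt_eqF.
have hA : psd (P1 + P2) by apply: psdD; apply: projector_psd.
have k0 : 0 <= 2 / delta ^+ 2 by rewrite divr_ge0 // exprn_ge0.
have psd1 : psd (1%:M : 'M[C]_n).
  by apply: projector_psd; split; rewrite ?adjmx1 ?mulmx1.
case: (boolP (delta <= 1)) => hd; last first.
  have hd' : 1 <= delta by move: hd; rewrite -real_ltNge ?real1 // => /ltW.
  exists 0; split; first by split; rewrite ?adjmx0 ?mul0mx.
  split; last by rewrite /loewner_le subr0; apply: psdZ.
  have key0 : forall P : 'M[C]_n, projector P -> psd (delta *: 1%:M + 0 - P).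
    move=> P hP; rewrite addr0.
    have -> : delta *: 1%:M - P = (delta - 1) *: 1%:M + (1%:M - P).
      by rewrite scalerBl scale1r addrA subrK.
    apply: psdD; first by apply: psdZ; rewrite ?subr_ge0.
    exact/projector_psd/projectorC.
  by move=> rho hr; split; apply: tr_step hr; apply: key0.
have [U [d [U1 U2 dge0 eA]]] := spectral_psd hA.
pose c := delta ^+ 2 / 2.
have c0 : 0 <= c by rewrite divr_ge0 // exprn_ge0.
have cR : c \is Num.real by apply: ger0_real.
pose e := \row_i (if c <= d 0 i then 1 else 0 : C).
have e0 : forall i, 0 <= e 0 i by move=> i; rewrite mxE; case: ifP.
pose S := Dg U e.
have hS : projector S.
  split; first by rewrite /S /Dg !adjmxM adjmxK adj_diag // mulmxA.
  rewrite /S DgM //; congr (Dg U _); apply/matrixP => i j.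
  by rewrite !ord1 !mxE; case: ifP; rewrite ?mulr1 ?mulr0.
have hc : c * (1 + delta^-1) <= delta.
  rewrite -subr_ge0.
  have -> : delta - c * (1 + delta^-1) = delta * (1 - delta) / 2.
    by rewrite /c; field.
  by rewrite divr_ge0 // mulr_ge0 // subr_ge0.
have hQ : forall Pa Pb, Pa + Pb = P1 + P2 ->
   psd (c *: (1%:M - S) - (1%:M - S) *m (Pa + Pb) *m (1%:M - S)).
  move=> Pa Pb ->; rewrite eA -/(Dg U d) -(Dg1 U2) /S -DgB !DgM // -DgZ -DgB.
  apply: Dg_psd => i; rewrite !mxE.
  have diR : d 0 i \is Num.real by apply: ger0_real.
  case: ifP => h; first by rewrite subrr !mulr0 subrr.
  rewrite subr0 !mulr1 mul1r subr_ge0; apply: ltW.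
  by rewrite real_ltNge ?h.
exists S; split => //; split.
  move=> rho hr; split; apply: tr_step hr; first exact: (key hS hP1 hP2 hdelta c0 hc (hQ _ _ erefl)).
  apply: (key hS hP2 hP1 hdelta c0 hc (hQ _ _ (addrC _ _))).
rewrite /loewner_le eA -/(Dg U d) /S -DgZ -DgB //.
apply: Dg_psd => i; rewrite !mxE.
case: ifP => h; last by rewrite subr0 mulr_ge0.
rewrite subr_ge0.
have e1 : 2 / delta ^+ 2 * c = 1 by rewrite /c; field; rewrite ?pnatr_eq0.
by rewrite -[X in X <= _]e1 ler_wpM2l.
Qed.

Theorem lemma2 (C : numClosedFieldType) (n : nat) (P1 P2 : 'M[C]_n)
    (hP1 : projector P1) (hP2 : projector P2) (delta : C) (hdelta : 0 < delta) :
  exists Pstar : 'M[C]_n,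
    projector Pstar /\
    (forall rho : 'M[C]_n, density rho ->
       \tr (P1 *m rho) - delta <= \tr (Pstar *m rho) /\
       \tr (P2 *m rho) - delta <= \tr (Pstar *m rho)) /\
    loewner_le Pstar ((2 / delta ^+ 2) *: (P1 + P2)).
Proof. exact: lemma2_aux. Qed.
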